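(* Let $n,m\ge1$, $c_1,\dots,c_n>0$, $T>0$, $\epsilon>0$, $r_1,\dots,r_m>0$, $\kappa_{ij}\ge0$. Let $\mu_j(q_j)=0$ for $q_j\le c_j$ and $\mu_j(q_j)=T(1-c_j/q_j)$ for $q_j>c_j$; $\delta_{ij}(\mu)=e^{-(\kappa_{ij}+\mu_j)/\epsilon}/\sum_k e^{-(\kappa_{ik}+\mu_k)/\epsilon}$; $\varphi^i_\epsilon(\mu)=-\epsilon\log\sum_j e^{-(\kappa_{ij}+\mu_j)/\epsilon}$; and $D(\mu)=\sum_i r_i\varphi^i_\epsilon(\mu)+\sum_j c_j\log(1-\mu_j/T)$ for $\mu\in[0,T)^n$. Let $q:[0,\infty)\to\mathbb{R}^n$ be a solution of $\dot q_j=\sum_i r_i\delta_{ij}(\mu(q))-q_j/T$, $j=1,\dots,n$, and let $\mathcal{T}$ be the set of times $t$ at which all functions $t\mapsto\mu_j(q_j(t))$ and $t\mapsto c_j\log(1-\mu_j(q_j(t))/T)$ are differentiable. Then for every $t\in\mathcal{T}$, $$\frac{d}{dt}D(\mu(q(t)))=\sum_{j:\,q_j(t)>c_j}T c_j\Big[\frac{\dot q_j(t)}{q_j(t)}\Big]^2\ge0.$$ Consequently, $D(\mu(q(t)))$ is non-decreasing in $t$.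
   Context: The complement of $\mathcal{T}$ in $[0,\infty)$ has Lebesgue measure zero, and $t\mapsto D(\mu(q(t)))$ is absolutely continuous. *)

(* Defs.v *)
From HB Require Import structures.
From mathcomp Require Import all_boot all_order all_algebra.
From mathcomp Require Import all_classical all_reals all_analysis.
Set Implicit Arguments. Unset Strict Implicit. Unset Printing Implicit Defensive.
Import Order.TTheory GRing.Theory Num.Theory.
Local Open Scope ring_scope.
Local Open Scope classical_set_scope.

Section Defs.
Variable R : realType.

Definition muf (T c q : R) : R := if q <= c then 0 else T * (1 - c / q).

Definition delta (m n : nat) (eps : R) (kappa : 'I_m -> 'I_n -> R)
    (mu : 'I_n -> R) (i : 'I_m) (j : 'I_n) : R :=
  expR (- (kappa i j + mu j) / eps) /
  \sum_(k < n) expR (- (kappa i k + mu k) / eps).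

Definition phi (m n : nat) (eps : R) (kappa : 'I_m -> 'I_n -> R)
    (mu : 'I_n -> R) (i : 'I_m) : R :=
  - eps * ln (\sum_(j < n) expR (- (kappa i j + mu j) / eps)).

Definition Dfun (m n : nat) (eps T : R) (kappa : 'I_m -> 'I_n -> R)
    (r : 'I_m -> R) (c : 'I_n -> R) (mu : 'I_n -> R) : R :=
  \sum_(i < m) r i * phi eps kappa mu i + \sum_(j < n) c j * ln (1 - mu j / T).

Definition goodTimes (n : nat) (T : R) (c : 'I_n -> R) (q : 'I_n -> R -> R)
  : set R :=
  [set t | 0 <= t /\ forall j : 'I_n,
     derivable (fun s => muf T (c j) (q j s)) t 1 /\
     derivable (fun s => c j * ln (1 - muf T (c j) (q j s) / T)) t 1].

Definition abs_cont_on (f : R -> R) (a b : R) : Prop :=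
  forall e : R, 0 < e -> exists d : R, 0 < d /\
    forall (k : nat) (x y : 'I_k -> R),
      (forall i, a <= x i /\ x i <= y i /\ y i <= b) ->
      (forall i j, i != j -> y i <= x j \/ y j <= x i) ->
      \sum_(i < k) (y i - x i) < d ->
      \sum_(i < k) `|f (y i) - f (x i)| < e.

End Defs.

(* Main.v *)
Require Import Defs.
From HB Require Import structures.
From mathcomp Require Import all_boot all_order all_algebra.
From mathcomp Require Import all_classical all_reals all_analysis.
From mathcomp Require Import ring lra.
Import Order.TTheory GRing.Theory Num.Theory.
Local Open Scope ring_scope.
Local Open Scope classical_set_scope.
Module Helpers.
Import numFieldNormedType.Exports.
Set Implicit Arguments. Unset Strict Implicit.

Section Gen.
Variable R : realType.

Lemma deriv_pos (f : R -> R) (x d : R) :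
  is_derive x 1 f d -> 0 < d ->
  exists2 e, 0 < e & forall s, `|s - x| < e -> s != x -> 0 < (s - x) * (f s - f x).
Proof.
move=> [df <-] d0.
have := @cvgr_gt R R 0^' (Proper_dnbhs_numFieldType 0) _ _ df 0 d0.
rewrite near_withinE => /nbhs_ballP [e /= e0 He].
exists e => // s se sx.
have hs : ball 0 e (s - x) by rewrite /ball /= sub0r normrN.
have := He _ hs; rewrite /= subr_eq0 sx => /(_ isT).
rewrite /= /GRing.scale /= mulr1 subrK => H.
have sx0 : s - x != 0 by rewrite subr_eq0.
have -> : (s - x) * (f s - f x) = (s - x) ^+ 2 * ((s - x)^-1 * (f s - f x)).
  by rewrite expr2 mulrA mulrK ?unitfE.
by rewrite pmulr_rgt0 // exprn_even_gt0.
Qed.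

Lemma deriv_pos_right (f : R -> R) (x d : R) :
  is_derive x 1 f d -> 0 < d ->
  exists2 e, 0 < e & forall s, x < s -> s < x + e -> f x < f s.
Proof.
move=> fd d0; have [e e0 He] := deriv_pos fd d0.
exists e => // s xs se.
have := He s; rewrite ger0_norm ?subr_ge0 ?ltW // ltrBlDl se gt_eqF // => /(_ isT isT).
by rewrite pmulr_rgt0 ?subr_gt0.
Qed.

Lemma deriv_min (f : R -> R) (x : R) :
  derivable f x 1 -> (forall s, f x <= f s) -> 'D_1 f x = 0.
Proof.
move=> df fmin; set d := 'D_1 f x.
have fd : is_derive x 1 f d by apply: derivableP.
case: (ltgtP d 0) => [dlt|dgt|//].
- have fnd : is_derive x 1 (- f) (- d) by apply: is_deriveN.
  have dn : 0 < - d by rewrite oppr_gt0.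
  have [e e0 He'] := deriv_pos fnd dn.
  have := He' (x + e / 2).
  have -> : x + e / 2 - x = e / 2 by ring.
  have e2 : e / 2 < e by lra.
  rewrite ger0_norm ?divr_ge0 ?ltW // e2.
  have -> : (x + e / 2 != x) by apply/eqP; lra.
  move=> /(_ isT isT); rewrite /= pmulr_rgt0 ?divr_gt0 // => H.
  have H3 : 0 < - f (x + e / 2) + f x by move: H; rewrite /= opprK.
  by move: (fmin (x + e / 2)) H3; lra.
- have [e e0 He] := deriv_pos fd dgt.
  have := He (x - e / 2).
  have -> : x - e / 2 - x = - (e / 2) by ring.
  have e2 : e / 2 < e by lra.
  rewrite normrN ger0_norm ?divr_ge0 ?ltW // e2.
  have -> : (x - e / 2 != x) by apply/eqP; lra.
  move=> /(_ isT isT); rewrite nmulr_rgt0 ?oppr_lt0 ?divr_gt0 // => H.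
  by move: (fmin (x - e / 2)) H; lra.
Qed.

Lemma deriv_max (f : R -> R) (x : R) :
  derivable f x 1 -> (forall s, f s <= f x) -> 'D_1 f x = 0.
Proof.
move=> df fmax.
have : 'D_1 (- f) x = 0.
  apply: deriv_min; first exact: derivableN.
  by move=> s; rewrite /= lerN2.
by rewrite deriveN // => /eqP; rewrite oppr_eq0 => /eqP.
Qed.

Lemma is_derive_sumf k (F : 'I_k -> R -> R) (dF : 'I_k -> R) (t : R) :
  (forall i, is_derive t 1 (F i) (dF i)) ->
  is_derive t 1 (fun s => \sum_(i < k) F i s) (\sum_(i < k) dF i).
Proof.
move=> H; have := is_derive_sum H.
by rewrite fct_sumE.
Qed.

Lemma is_derive_aff (h : R -> R) (t a b dh : R) :
  is_derive t 1 h dh -> is_derive t 1 (fun s => a * h s + b) (a * dh).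
Proof.
move=> hd.
have := is_deriveD (is_deriveZ a hd) (is_derive_cst b t 1).
by rewrite addr0.
Qed.


Lemma is_derive_ln_comp (g : R -> R) (t dg : R) :
  is_derive t 1 g dg -> 0 < g t ->
  is_derive t 1 (fun s => ln (g s)) ((g t)^-1 * dg).
Proof.
move=> gd g0.
have := @is_derive1_comp R (@ln R) g t (g t)^-1 dg (is_derive1_ln g0) gd.
by [].
Qed.

Lemma is_derive_exp_comp (g : R -> R) (t dg : R) :
  is_derive t 1 g dg ->
  is_derive t 1 (fun s => expR (g s)) (expR (g t) * dg).
Proof.
move=> gd.
exact: (@is_derive1_comp R (@expR R) g t (expR (g t)) dg (is_derive_expR (g t)) gd).
Qed.

Variables (n m : nat) (c : 'I_n -> R) (T eps : R) (r : 'I_m -> R)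
  (kappa : 'I_m -> 'I_n -> R).
Hypothesis (hn : (1 <= n)%N) (hT : 0 < T) (heps : 0 < eps).

Definition Acoef (mu : 'I_n -> R) (j : 'I_n) :=
  \sum_(i < m) r i * delta eps kappa mu i j.

Lemma Dgen (H : 'I_n -> R -> R) (t : R) (dH dL : 'I_n -> R) :
  (forall j, is_derive t 1 (H j) (dH j)) ->
  (forall j, is_derive t 1 (fun s => c j * ln (1 - H j s / T)) (dL j)) ->
  is_derive t 1 (fun s => Dfun eps T kappa r c (fun j => H j s))
    (\sum_(j < n) (Acoef (fun k => H k t) j * dH j + dL j)).
Proof.
move=> Hd Ld.
rewrite /Dfun /phi.
set E := fun i j s => expR (- (kappa i j + H j s) / eps).
have Ed : forall i j, is_derive t 1 (E i j) (E i j t * (- eps^-1 * dH j)).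
  move=> i j; apply: is_derive_exp_comp.
  have -> : (fun s => - (kappa i j + H j s) / eps) =
            (fun s => - eps^-1 * H j s + (- kappa i j / eps)).
    by apply/funext => s; ring.
  exact: is_derive_aff.
set S := fun i s => \sum_(j < n) E i j s.
have S0 : forall i, 0 < S i t.
  move=> i; rewrite /S (bigD1 (Ordinal hn)) //= ltr_pwDl ?expR_gt0 //.
  by apply: sumr_ge0 => k _; rewrite /E expR_ge0.
have Sd : forall i, is_derive t 1 (S i) (\sum_(j < n) E i j t * (- eps^-1 * dH j)).
  by move=> i; apply: is_derive_sumf.
have Pd : forall i, is_derive t 1 (fun s => r i * (- eps * ln (S i s)))
    (r i * (- eps * ((S i t)^-1 * \sum_(j < n) E i j t * (- eps^-1 * dH j)))).
  move=> i.
  have := is_derive_aff (- eps) 0 (is_derive_ln_comp (Sd i) (S0 i)).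
  move=> /(is_derive_aff (r i) 0).
  by under eq_fun do rewrite !addr0.
have HD := is_deriveD (is_derive_sumf Pd) (is_derive_sumf Ld).
eapply is_derive_eq; first exact: HD.
rewrite big_split /=; congr (_ + _).
rewrite /Acoef.
under [RHS]eq_bigr do rewrite mulr_suml.
rewrite exchange_big /=; apply: eq_bigr => i _.
rewrite !mulr_sumr; apply: eq_bigr => j _.
rewrite /delta /E /S /=.
field.
by rewrite gt_eqF ?(S0 i) // gt_eqF.
Qed.


Lemma branch_pos (qj : R -> R) (cj t dq : R) :
  is_derive t 1 qj dq -> 0 < qj t -> 0 < cj ->
  is_derive t 1 (fun s => T * (1 - cj / qj s)) (T * cj * dq / (qj t)^+2) /\
  is_derive t 1 (fun s => cj * ln (1 - T * (1 - cj / qj s) / T)) (- (cj * dq / qj t)).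
Proof.
move=> qd q0 c0.
have qn0 : qj t != 0 by rewrite gt_eqF.
have Vd := is_deriveV qn0 qd.
split.
  have -> : (fun s => T * (1 - cj / qj s)) = (fun s => - (T * cj) * (qj s)^-1 + T).
    by apply/funext => s; ring.
  eapply is_derive_eq; first exact: (is_derive_aff (- (T * cj)) T Vd). rewrite /GRing.scale /=; field; exact: qn0.
have -> : (fun s => cj * ln (1 - T * (1 - cj / qj s) / T)) =
          (fun s => cj * ln (cj * (qj s)^-1 + 0) + 0).
  apply/funext => s; rewrite mulrAC divff ?gt_eqF // mul1r !addr0.
  by congr (_ * ln _); ring.
have g0 : 0 < cj * (qj t)^-1 + 0 by rewrite addr0 divr_gt0.
eapply is_derive_eq; first exact: (is_derive_aff cj 0 (is_derive_ln_comp (is_derive_aff cj 0 Vd) g0)). rewrite /GRing.scale /=; field.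
by rewrite qn0 gt_eqF.
Qed.

Lemma muf_ge0 (cj q : R) : 0 < cj -> 0 <= muf T cj q.
Proof.
move=> c0; rewrite /muf; case: ifPn => // /negbTE; rewrite leNgt => /negbFE cq.
have q0 : 0 < q by apply: lt_trans cq.
apply: mulr_ge0; first exact: ltW.
by rewrite subr_ge0 ler_pdivrMr // mul1r ltW.
Qed.

Lemma Lmuf_le0 (cj q : R) : 0 < cj -> cj * ln (1 - muf T cj q / T) <= 0.
Proof.
move=> c0; apply: mulr_ge0_le0; first exact: ltW.
apply: ln_le0; rewrite lerBlDr lerDl divr_ge0 ?muf_ge0 ?ltW //.
Qed.

Lemma muf_c (cj : R) : muf T cj cj = 0.
Proof. by rewrite /muf lexx. Qed.

Lemma Lmuf_c (cj : R) : cj * ln (1 - muf T cj cj / T) = 0.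
Proof. by rewrite muf_c mul0r subr0 ln1 mulr0. Qed.

Lemma cont_of_derive (f : R -> R) (t d : R) : is_derive t 1 f d -> {for t, continuous f}.
Proof.
move=> [fd _]; apply: differentiable_continuous; exact/derivable1_diffP.
Qed.

Lemma perj1 (qj : R -> R) (cj t dq A : R) :
  is_derive t 1 qj dq -> 0 < cj -> dq = A - qj t / T ->
  derivable (fun s => muf T cj (qj s)) t 1 ->
  derivable (fun s => cj * ln (1 - muf T cj (qj s) / T)) t 1 ->
  A * 'D_1 (fun s => muf T cj (qj s)) t
    + 'D_1 (fun s => cj * ln (1 - muf T cj (qj s) / T)) t
  = if cj < qj t then T * cj * (dq / qj t) ^+ 2 else 0.
Proof.
move=> qd c0 dqE hd Ld.
have qc := cont_of_derive qd.
case: (ltgtP (qj t) cj) => [qlt|qgt|qeq].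
- have nr : \forall s \near t, qj s < cj by apply: (cvgr_lt _ qc).
  rewrite (@near_eq_derive _ _ _ _ (cst 0)); last first.
    by apply: filterS nr => s qs; rewrite /muf ltW.
  rewrite (@near_eq_derive _ _ _ (fun s => cj * ln (1 - muf T cj (qj s) / T)) (cst 0)); last first.
    by apply: filterS nr => s qs; rewrite /muf ltW // mul0r subr0 ln1 mulr0.
  by rewrite !derive_cst mulr0 addr0.
- have q0 : 0 < qj t by apply: lt_trans qgt.
  have nr : \forall s \near t, cj < qj s by apply: (cvgr_gt _ qc).
  have [G1 G2] := branch_pos qd q0 c0.
  rewrite (@near_eq_derive _ _ _ _ (fun s => T * (1 - cj / qj s))); last first.
    by apply: filterS nr => s qs; rewrite /muf leNgt qs.
  rewrite (@near_eq_derive _ _ _ (fun s => cj * ln (1 - muf T cj (qj s) / T))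
     (fun s => cj * ln (1 - T * (1 - cj / qj s) / T))); last first.
    by apply: filterS nr => s qs; rewrite /muf leNgt qs.
  rewrite !derive_val.
  have -> : A = dq + qj t / T by rewrite dqE subrK.
  field.
  by rewrite !gt_eqF.
- have h0 : 'D_1 (fun s => muf T cj (qj s)) t = 0.
    apply: deriv_min => // s /=.
    have -> : muf T cj (qj t) = 0 by rewrite qeq muf_c.
    exact: muf_ge0.
  have l0 : 'D_1 (fun s => cj * ln (1 - muf T cj (qj s) / T)) t = 0.
    apply: deriv_max => // s /=.
    have -> : cj * ln (1 - muf T cj (qj t) / T) = 0 by rewrite qeq Lmuf_c.
    exact: Lmuf_le0.
  by rewrite h0 l0 mulr0 addr0.
Qed.


Lemma nbhs_to_right (P : R -> Prop) (x : R) :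
  (\forall s \near x, P s) -> \forall s \near x^'+, P s.
Proof. by move=> H; rewrite near_withinE; apply: filterS H => s Ps _. Qed.

Lemma ex_to_right (P : R -> Prop) (x : R) :
  (exists2 e, 0 < e & forall s, x < s -> s < x + e -> P s) ->
  \forall s \near x^'+, P s.
Proof.
move=> [e e0 H].
have xe : x < x + e by rewrite ltrDl.
by apply: filterS (filterI (nbhs_right_gt x) (nbhs_right_lt xe)) => s [] /H.
Qed.

Lemma squeeze_derivable (f g : R -> R) (x K : R) : 0 <= K ->
  (forall s, `|f s - f x| <= K * `|g s - g x|) -> is_derive x 1 g 0 ->
  derivable f x 1.
Proof.
move=> K0 Hfg [gd gD].
have Qg : (fun h => h^-1 *: ((g \o shift x) (h *: 1) - g x)) @ 0^' --> 'D_1 g x := gd.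
rewrite gD in Qg.
apply/cvg_ex; exists 0; apply/cvgr0Pnorm_lt => e e0.
have eK : 0 < e / (K + 1) by rewrite divr_gt0 // ltr_wpDl.
have := @cvgr0_norm_lt R R R 0^' (Proper_dnbhs_numFieldType 0) _ Qg _ eK.
apply: filterS => h /=; rewrite /GRing.scale /= mulr1 !normrM => Hh.
apply: le_lt_trans (_ : _ <= K * (`|h^-1| * `|g (h + x) - g x|)) _.
  by rewrite mulrCA; apply: ler_wpM2l => //; apply: Hfg.
apply: le_lt_trans (ler_wpM2l K0 (ltW Hh)) _.
rewrite mulrA ltr_pdivrMr ?ltr_wpDl // mulrDr mulr1 mulrC ltrDl //.
Qed.

Lemma perj2 (qj : R -> R) (cj x0 dq A : R) :
  is_derive x0 1 qj dq -> 0 < cj -> dq = A - qj x0 / T ->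
  exists Hh : R -> R, [/\ Hh x0 = muf T cj (qj x0),
     \forall s \near x0^'+, Hh s = muf T cj (qj s),
     derivable Hh x0 1, derivable (fun s => cj * ln (1 - Hh s / T)) x0 1 &
     0 <= A * 'D_1 Hh x0 + 'D_1 (fun s => cj * ln (1 - Hh s / T)) x0].
Proof.
move=> qd c0 dqE.
have qc := cont_of_derive qd.
have posb : cj <= qj x0 -> (\forall s \near x0^'+, cj < qj s) ->
  exists Hh : R -> R, [/\ Hh x0 = muf T cj (qj x0),
     \forall s \near x0^'+, Hh s = muf T cj (qj s),
     derivable Hh x0 1, derivable (fun s => cj * ln (1 - Hh s / T)) x0 1 &
     0 <= A * 'D_1 Hh x0 + 'D_1 (fun s => cj * ln (1 - Hh s / T)) x0].
  move=> cq nr.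
  have q0 : 0 < qj x0 by apply: lt_le_trans cq.
  have [G1 G2] := branch_pos qd q0 c0.
  exists (fun s => T * (1 - cj / qj s)); split.
  - rewrite /muf; case: ifPn => // qle.
    have -> : qj x0 = cj by apply/eqP; rewrite eq_le qle cq.
    by rewrite divff ?gt_eqF // subrr mulr0.
  - by apply: filterS nr => s qs; rewrite /muf leNgt qs.
  - by case: (G1).
  - by case: (G2).
  - case: G1 => _ ->; case: G2 => _ ->.
    have -> : A = dq + qj x0 / T by rewrite dqE subrK.
    have -> : (dq + qj x0 / T) * (T * cj * dq / qj x0 ^+ 2) + - (cj * dq / qj x0)
              = T * cj * (dq / qj x0) ^+ 2.
      by field; rewrite !gt_eqF.
    by apply: mulr_ge0; [apply: mulr_ge0; apply: ltW | apply: sqr_ge0].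
have zerob : qj x0 <= cj -> (\forall s \near x0^'+, qj s <= cj) ->
  exists Hh : R -> R, [/\ Hh x0 = muf T cj (qj x0),
     \forall s \near x0^'+, Hh s = muf T cj (qj s),
     derivable Hh x0 1, derivable (fun s => cj * ln (1 - Hh s / T)) x0 1 &
     0 <= A * 'D_1 Hh x0 + 'D_1 (fun s => cj * ln (1 - Hh s / T)) x0].
  move=> cq nr.
  have Lz : (fun s : R => cj * ln (1 - (fun _ : R => (0:R)) s / T)) = cst 0.
    by apply/funext => s; rewrite /= mul0r subr0 ln1 mulr0.
  exists (fun _ => 0); split.
  - by rewrite /muf cq.
  - by apply: filterS nr => s qs; rewrite /muf qs.
  - exact: derivable_cst.
  - by rewrite Lz; exact: derivable_cst.
  - by rewrite Lz !derive_cst mulr0 addr0.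
case: (ltgtP (qj x0) cj) => [qlt|qgt|qeq].
- apply: zerob; first exact: ltW.
  apply: nbhs_to_right; apply: filterS (cvgr_lt _ qc _ qlt) => s; exact: ltW.
- apply: posb; first exact: ltW.
  exact: nbhs_to_right (cvgr_gt _ qc _ qgt).
case: (ltgtP dq 0) => [dlt|dgt|deq].
- apply: zerob; first by rewrite qeq.
  have nqd : is_derive x0 1 (- qj) (- dq) by apply: is_deriveN.
  have dn : 0 < - dq by rewrite oppr_gt0.
  have [e e0 He] := deriv_pos_right nqd dn.
  apply: ex_to_right; exists e => // s xs se.
  have := He s xs se; rewrite /= ltrN2 => H; rewrite -qeq; exact: ltW.
- apply: posb; first by rewrite qeq.
  have [e e0 He] := deriv_pos_right qd dgt.
  apply: ex_to_right; exists e => // s xs se.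
  by rewrite -qeq; apply: He.
-
  have qd0 : is_derive x0 1 qj 0 by rewrite -deq.
  have hd : derivable (fun s => muf T cj (qj s)) x0 1.
    apply: (@squeeze_derivable _ qj x0 (T / cj)); first by apply: divr_ge0; apply: ltW.
    move=> s; rewrite qeq muf_c subr0 ger0_norm ?muf_ge0 //.
    rewrite /muf; case: ifPn => [_|].
      by apply: mulr_ge0; [apply: divr_ge0; apply: ltW | apply: normr_ge0].
    rewrite -ltNge => cs.
    have q0 : 0 < qj s by apply: lt_trans cs.
    rewrite gtr0_norm ?subr_gt0 //.
    have -> : 1 - cj / qj s = (qj s - cj) * (qj s)^-1 by field; rewrite gt_eqF.
    rewrite mulrA [X in _ <= X]mulrAC; apply: ler_wpM2l.
      by apply: mulr_ge0; [apply: ltW | rewrite subr_ge0 ltW].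
    by rewrite lef_pV2 ?posrE // ltW.
  have hD := derivableP hd.
  have h0 : muf T cj (qj x0) = 0 by rewrite qeq muf_c.
  have g0 : 0 < - T^-1 * muf T cj (qj x0) + 1 by rewrite h0 mulr0 add0r ltr01.
  have Ld : derivable (fun s => cj * ln (1 - muf T cj (qj s) / T)) x0 1.
    have -> : (fun s => cj * ln (1 - muf T cj (qj s) / T)) =
       (fun s => cj * ln (- T^-1 * muf T cj (qj s) + 1) + 0).
      by apply/funext => s; rewrite addr0; congr (_ * ln _); ring.
    by case: (is_derive_aff cj 0 (is_derive_ln_comp (is_derive_aff (- T^-1) 1 hD) g0)).
  exists (fun s => muf T cj (qj s)); split => //.
  + exact: nearW.
  + rewrite (deriv_min hd); last by move=> s; rewrite /= h0 muf_ge0.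
    rewrite (deriv_max Ld); last by move=> s; rewrite /= qeq Lmuf_c Lmuf_le0.
    by rewrite mulr0 addr0.
Qed.

End Gen.

Section Mono.
Variable R : realType.

Lemma ac_cont (f : R -> R) : (forall b, 0 <= b -> abs_cont_on f 0 b) ->
  forall x0, 0 <= x0 -> forall e, 0 < e ->
  exists2 d, 0 < d & forall x, 0 <= x -> `|x - x0| < d -> `|f x - f x0| < e.
Proof.
move=> hac x0 x00 e e0.
have [d [d0 Hd]] := hac (x0 + 1) (ltW (ltr_wpDl x00 ltr01)) e e0.
exists (Order.min d 1); first by rewrite lt_min d0 ltr01.
move=> x x0' xd; rewrite lt_min in xd; case/andP: xd => xd x1.
have key : forall lo hi, 0 <= lo -> lo <= hi -> hi <= x0 + 1 -> hi - lo < d ->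
    `|f hi - f lo| < e.
  move=> lo hi l0 lh hb hd.
  have := Hd 1%N (fun _ => lo) (fun _ => hi).
  rewrite !big_ord1; apply => //.
  by move=> i j; rewrite !ord1 eqxx.
case: (lerP x x0) => xx.
- have h1 : x0 - x < d by move: xd; rewrite ler0_norm ?subr_le0 // opprB.
  rewrite distrC; apply: key => //; lra.
- rewrite ger0_norm ?subr_ge0 ?ltW // in xd x1.
  apply: key => //; lra.
Qed.

Lemma mono_gen (f : R -> R) :
  (forall b, 0 <= b -> abs_cont_on f 0 b) ->
  (forall x0, 0 < x0 -> forall e, 0 < e ->
     \forall u \near x0^'+, f x0 + e * x0 < f u + e * u) ->
  forall s t, 0 <= s -> s <= t -> f s <= f t.
Proof.
move=> hac hloc.
have pos : forall s t, 0 < s -> s <= t -> f s <= f t.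
  move=> s t s0 st; case: (lerP (f s) (f t)) => // fts.
  have st' : s < t by rewrite lt_neqAle st andbT; apply/eqP => est; move: fts; rewrite est ltxx.
  set ep := (f s - f t) / (2 * (t - s)).
  have ep0 : 0 < ep by rewrite /ep divr_gt0 ?subr_gt0 // mulr_gt0 ?subr_gt0.
  pose g := fun x => f x + ep * x.
  have gst : g s - g t = (f s - f t) / 2.
    have tsn : t - s != 0 by rewrite subr_eq0 gt_eqF.
    have E : forall a b u : R, u != 0 -> a - b - (a - b) / (2 * u) * u = (a - b) / 2.
      by move=> a b u un; field.
    rewrite /g /ep -(E (f s) (f t) (t - s) tsn); ring.
  have gts : g t < g s by rewrite -subr_gt0 gst divr_gt0 // subr_gt0.
  pose y := (g s + g t) / 2.
  have ys : y < g s by rewrite /y; move: gts; generalize (g s) (g t) => a b; lra.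
  have yt : g t < y by rewrite /y; move: gts; generalize (g s) (g t) => a b; lra.
  set A := [set x | s <= x <= t /\ y <= g x].
  have As : A s by split; [rewrite lexx st | exact: ltW].
  have hs : has_sup A.
    split; first by exists s.
    by exists t => x [/andP[_ ?] _].
  set x0 := sup A.
  have sx0 : s <= x0 by apply: sup_upper_bound.
  have x0t : x0 <= t by apply: ge_sup; [exists s | move=> x [/andP[_ ?] _]].
  have x00 : 0 <= x0 by apply: le_trans (ltW s0) sx0.
  have gx0 : y <= g x0.
    rewrite leNgt; apply/negP => gy.
    have yg : 0 < y - g x0 by rewrite subr_gt0.
    have [d d0 Hd] := ac_cont hac x00 yg.
    have [z [/andP [sz zt] yz] zx] := sup_adherent d0 hs.
    have zx0 : z <= x0 by apply: sup_upper_bound => //; split => //; rewrite sz zt.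
    have hz : `|z - x0| < d by rewrite ler0_norm ?subr_le0 // opprB ltrBlDl -ltrBlDr.
    have := Hd z (le_trans (ltW s0) sz) hz.
    have epz : ep * z <= ep * x0 by rewrite ler_wpM2l // ltW.
    move: yz; rewrite /g => yz /ltr_normlP [_ H].
    move: gy; rewrite /g => gy; lra.
  have x0t' : x0 < t.
    rewrite lt_neqAle x0t andbT; apply/eqP => ext; move: gx0; rewrite ext; lra.
  have x0p : 0 < x0 by apply: lt_le_trans s0 sx0.
  have [u /= [[xu ut] gu]] := filter_ex (filterI (filterI (nbhs_right_gt x0) (nbhs_right_lt x0t')) (hloc x0 x0p ep ep0)).
  have Au : A u.
    split; first by rewrite (le_trans sx0 (ltW xu)) ltW.
    by move: gx0; rewrite /g; lra.
  have := sup_upper_bound hs Au; rewrite -/x0; lra.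
move=> s t s0 st.
case: (ltrP 0 s) => [s0'|s0']; first exact: pos.
have se : s = 0 by apply/eqP; rewrite eq_le s0' s0.
case: (lerP (f s) (f t)) => // fts.
have t0 : 0 < t.
  rewrite lt_neqAle -se st andbT; apply/eqP => ts; by move: fts; rewrite -ts ltxx.
have fg : 0 < f s - f t by rewrite subr_gt0.
have [d d0 Hd] := ac_cont hac s0 fg.
pose u := Order.min (d / 2) t.
have u0 : 0 < u by rewrite /u lt_min t0 divr_gt0.
have ut : u <= t by rewrite /u ge_min lexx orbT.
have ud : u <= d / 2 by rewrite /u ge_min lexx.
have hu : `|u - s| < d by rewrite se subr0 gtr0_norm //; lra.
have := Hd u (ltW u0) hu => /ltr_normlP [H _].
have := pos u t u0 ut; lra.
Qed.

End Mono.

End Helpers.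
Import Helpers.

Theorem proposition3 (R : realType) (n m : nat) (hn : (1 <= n)%N) (hm : (1 <= m)%N)
  (c : 'I_n -> R) (T eps : R) (r : 'I_m -> R) (kappa : 'I_m -> 'I_n -> R)
  (hc : forall j, 0 < c j) (hT : 0 < T) (heps : 0 < eps)
  (hr : forall i, 0 < r i) (hkappa : forall i j, 0 <= kappa i j)
  (q : 'I_n -> R -> R)
  (hsol : forall (j : 'I_n) (t : R), 0 < t ->
     derivable (q j) t 1 /\
     derive1 (q j) t = \sum_(i < m) r i * delta eps kappa (fun k => muf T (c k) (q k t)) i j
                   - q j t / T)
  (hnull : (@lebesgue_measure R).-negligible
             ([set t | 0 <= t] `\` goodTimes T c q))
  (hac : forall b : R, 0 <= b ->
     abs_cont_on (fun t => Dfun eps T kappa r c (fun j => muf T (c j) (q j t))) 0 b) :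
  (forall t : R, 0 < t -> goodTimes T c q t ->
     derivable (fun s => Dfun eps T kappa r c (fun j => muf T (c j) (q j s))) t 1 /\
     derive1 (fun s => Dfun eps T kappa r c (fun j => muf T (c j) (q j s))) t
       = \sum_(j < n | c j < q j t) T * c j * (derive1 (q j) t / q j t) ^+ 2 /\
     0 <= \sum_(j < n | c j < q j t) T * c j * (derive1 (q j) t / q j t) ^+ 2)
  /\
  (forall s t : R, 0 <= s -> s <= t ->
     Dfun eps T kappa r c (fun j => muf T (c j) (q j s))
       <= Dfun eps T kappa r c (fun j => muf T (c j) (q j t))).
Proof.
have qd : forall j (t : R), 0 < t -> is_derive t 1 (q j) (derive1 (q j) t).
  move=> j t t0; rewrite derive1E; apply: derivableP; exact: (hsol j t t0).1.
split.
  move=> t t0 [_ Hg].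
  have hd : forall j, is_derive t 1 (fun s => muf T (c j) (q j s))
      ('D_1 (fun s => muf T (c j) (q j s)) t).
    by move=> j; apply: derivableP; exact: (Hg j).1.
  have Ld : forall j, is_derive t 1 (fun s => c j * ln (1 - muf T (c j) (q j s) / T))
      ('D_1 (fun s => c j * ln (1 - muf T (c j) (q j s) / T)) t).
    by move=> j; apply: derivableP; exact: (Hg j).2.
  have DD := @Dgen R n m c T eps r kappa hn heps (fun j s => muf T (c j) (q j s)) t _ _ hd Ld.
  have Eq : \sum_(j < n) (Acoef eps r kappa (fun k => muf T (c k) (q k t)) j *
       'D_1 (fun s => muf T (c j) (q j s)) t +
       'D_1 (fun s => c j * ln (1 - muf T (c j) (q j s) / T)) t)
     = \sum_(j < n | c j < q j t) T * c j * (derive1 (q j) t / q j t) ^+ 2.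
    rewrite [RHS]big_mkcond /=; apply: eq_bigr => j _.
    exact: (perj1 hT (qd j t t0) (hc j) (hsol j t t0).2 (Hg j).1 (Hg j).2).
  split; first by case: DD.
  split; first by rewrite derive1E; case: DD => _ ->.
  apply: sumr_ge0 => j _; apply: mulr_ge0; last exact: sqr_ge0.
  by apply: mulr_ge0; apply: ltW.
apply: mono_gen => // x0 x0p e e0.
have ex : forall j, exists Hh : R -> R,
  [/\ Hh x0 = muf T (c j) (q j x0),
     \forall s \near x0^'+, Hh s = muf T (c j) (q j s),
     derivable Hh x0 1, derivable (fun s => c j * ln (1 - Hh s / T)) x0 1 &
     0 <= Acoef eps r kappa (fun k => muf T (c k) (q k x0)) j * 'D_1 Hh x0
          + 'D_1 (fun s => c j * ln (1 - Hh s / T)) x0].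
  move=> j; exact: (perj2 hT (qd j x0 x0p) (hc j) (hsol j x0 x0p).2).
have [HH HHp] := choice ex.
have hd : forall j, is_derive x0 1 (HH j) ('D_1 (HH j) x0).
  by move=> j; apply: derivableP; have [] := HHp j.
have Ld : forall j, is_derive x0 1 (fun s => c j * ln (1 - HH j s / T))
    ('D_1 (fun s => c j * ln (1 - HH j s / T)) x0).
  by move=> j; apply: derivableP; have [] := HHp j.
have DD := @Dgen R n m c T eps r kappa hn heps HH x0 _ _ hd Ld.
have HH0 : (fun k => HH k x0) = (fun k => muf T (c k) (q k x0)).
  by apply/funext => k; have [] := HHp k.
rewrite HH0 in DD.
set d := \sum_(j < n) _ in DD.
have d0 : 0 <= d by apply: sumr_ge0 => j _; have [] := HHp j.
have G := is_deriveD DD (is_derive_aff e 0 (is_derive_id x0 1)).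
have de : 0 < d + e * 1 by rewrite mulr1 ltr_pwDr.
have [eps' eps0 He] := deriv_pos_right G de.
have Hnear := ex_to_right (ex_intro2 _ _ eps' eps0 He).
have Heq : \forall s \near x0^'+, forall j, HH j s = muf T (c j) (q j s).
  by apply: filter_forall => j; have [] := HHp j.
apply: filterS (filterI Hnear Heq) => u [Hu Hequ].
have E0 : Dfun eps T kappa r c (fun j => muf T (c j) (q j x0)) =
          Dfun eps T kappa r c (fun j => HH j x0) by rewrite HH0.
have Eu : Dfun eps T kappa r c (fun j => muf T (c j) (q j u)) =
          Dfun eps T kappa r c (fun j => HH j u).
  by congr Dfun; apply/funext => j; rewrite Hequ.
rewrite /= E0 Eu.
by rewrite -[e * x0]addr0 -[e * u]addr0; exact: Hu.
Qed.
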